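(* Let $n\ge2$ and for $P\in\mathrm{Mat}(n^2,\mathbb{C})$ put $P_1=P\otimes I_n$, $P_2=I_n\otimes P$. (a) Let $Q>0$ be real and let $P$ be a nontrivial solution of rank $r$ to $$P^*=P,\quad P^2=P,\quad Q^2(P_1P_2P_1-P_2P_1P_2)=P_1-P_2 .\qquad(\ast)$$ Let $k=\tfrac12\operatorname{rank}(P_1-P_2)$. Then for all integers $m\ge1$, $$\operatorname{tr}_3\big((P_1P_2)^m\big)=rn+(Q^{-2m}-1)\,k .$$ (b) Let $P$ be an orthogonal projection of rank $r$. If there exist a real constant $Q>1$ and a positive integer $k$ such that $\operatorname{tr}_3\big((P_1P_2)^m\big)=rn+(Q^{-2m}-1)k$ holds for $m=1,2,3$, then $P$ is a nontrivial solution of $(\ast)$ for this $Q$.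
   Context: $I_n$ is the $n\times n$ identity matrix, $\otimes$ the Kronecker product, $\operatorname{tr}_3$ the matrix trace on $\mathrm{Mat}(n^3,\mathbb{C})$. A solution of $(\ast)$ is trivial if $P=0$ or $P=I_n\otimes I_n$, nontrivial otherwise. *)

(* Defs.v *)
From HB Require Import structures.
From mathcomp Require Import all_boot all_order all_algebra.
From mathcomp Require Export mxtens.
Set Implicit Arguments. Unset Strict Implicit. Unset Printing Implicit Defensive.
Import Order.TTheory GRing.Theory Num.Theory.
Local Open Scope ring_scope.

(* Complex numbers are modelled by an arbitrary numClosedFieldType C
   (e.g. the complex numbers R[i] over a realType R); a "real" scalar is
   an element of Num.real. *)

Definition adjmx (C : numClosedFieldType) m n (A : 'M[C]_(m, n)) : 'M[C]_(n, m) :=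
  (map_mx Num.conj A)^T.

Definition Pone (C : numClosedFieldType) n (P : 'M[C]_(n * n)) : 'M[C]_(n * n * n) :=
  P *t (1%:M : 'M[C]_n).

Definition Ptwo (C : numClosedFieldType) n (P : 'M[C]_(n * n)) : 'M[C]_(n * n * n) :=
  castmx (mulnA n n n, mulnA n n n) ((1%:M : 'M[C]_n) *t P).

Definition orth_proj (C : numClosedFieldType) N (P : 'M[C]_N) : Prop :=
  adjmx P = P /\ P *m P = P.

Definition is_solution (C : numClosedFieldType) n (Q : C) (P : 'M[C]_(n * n)) : Prop :=
  orth_proj P /\
  Q ^+ 2 *: (Pone P *m Ptwo P *m Pone P - Ptwo P *m Pone P *m Ptwo P)
    = Pone P - Ptwo P.

Definition nontrivial (C : numClosedFieldType) n (P : 'M[C]_(n * n)) : Prop :=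
  P != 0 /\ P != 1%:M.

(* Main.v *)
Require Import Defs.
From HB Require Import structures.
From mathcomp Require Import all_boot all_order all_algebra.
From mathcomp Require Import mxtens.
From mathcomp Require Import ring.
Import Order.TTheory GRing.Theory Num.Theory.
Local Open Scope ring_scope.
Set Implicit Arguments. Unset Strict Implicit. Unset Printing Implicit Defensive.

Section Adj.
Variable C : numClosedFieldType.

Lemma adjmxM m n p (A : 'M[C]_(m, n)) (B : 'M[C]_(n, p)) :
  adjmx (A *m B) = adjmx B *m adjmx A.
Proof. by rewrite /adjmx map_mxM trmx_mul. Qed.

Lemma adjmxD m n (A B : 'M[C]_(m, n)) : adjmx (A + B) = adjmx A + adjmx B.
Proof. by rewrite /adjmx map_mxD linearD. Qed.

Lemma adjmxN m n (A : 'M[C]_(m, n)) : adjmx (- A) = - adjmx A.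
Proof. by rewrite /adjmx map_mxN linearN. Qed.

Lemma adjmxB m n (A B : 'M[C]_(m, n)) : adjmx (A - B) = adjmx A - adjmx B.
Proof. by rewrite adjmxD adjmxN. Qed.

Lemma adjmxZ m n a (A : 'M[C]_(m, n)) : adjmx (a *: A) = a^* *: adjmx A.
Proof. by rewrite /adjmx map_mxZ linearZ. Qed.

Lemma adjmx1 n : adjmx (1%:M : 'M[C]_n) = 1%:M.
Proof. by rewrite /adjmx map_mx1 trmx1. Qed.

Lemma adjmxK m n (A : 'M[C]_(m, n)) : adjmx (adjmx A) = A.
Proof. by apply/matrixP=> i j; rewrite !mxE conjCK. Qed.

Lemma tr_adj_mul_eq0 m n (A : 'M[C]_(m, n)) : \tr (adjmx A *m A) = 0 -> A = 0.
Proof.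
move=> H.
have E : \tr (adjmx A *m A) = \sum_i \sum_j `|A j i| ^+ 2.
  rewrite /mxtrace; apply: eq_bigr => i _; rewrite !mxE.
  by apply: eq_bigr => j _; rewrite !mxE normCKC.
have H2 : \sum_i \sum_j `|A j i| ^+ 2 = 0 by rewrite -E.
apply/matrixP => j i; rewrite mxE.
have Hi : \sum_j `|A j i| ^+ 2 = 0.
  by apply: (psumr_eq0P _ H2) => // k _; apply: sumr_ge0 => l _; apply: exprn_ge0.
have : `|A j i| ^+ 2 = 0.
  by apply: (psumr_eq0P _ Hi) => // k _; apply: exprn_ge0.
by move/eqP; rewrite sqrf_eq0 normr_eq0 => /eqP.
Qed.

End Adj.

Section Tr.
Variable C : numClosedFieldType.

Lemma tr_pid N r : (r <= N)%N -> \tr (pid_mx r : 'M[C]_N) = r%:R.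
Proof.
move=> le_rN; rewrite /mxtrace.
under eq_bigr do rewrite mxE eqxx /=.
rewrite (big_mkcond xpredT) /= -(big_mkord xpredT (fun i => ((i < r)%N)%:R)).
rewrite (@big_cat_nat _ _ _ r 0 N _ _ (leq0n r) le_rN) /=.
rewrite [X in _ + X]big1_seq ?addr0; last first.
  by move=> i /andP[_]; rewrite mem_index_iota => /andP[H _]; rewrite ltnNge H.
rewrite (@eq_big_nat _ _ _ 0 r _ (fun _ => 1)); last by move=> i /andP[_ ->].
by rewrite sumr_const_nat subn0.
Qed.

Lemma rank_idem N (E : 'M[C]_N) : E *m E = E -> (\rank E)%:R = \tr E.
Proof.
move=> EE.
have Hb := mulmx_ebase E.
set L := col_ebase E in Hb; set U := row_ebase E in Hb; set p := pid_mx _ in Hb.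
have uL : L \in unitmx by apply: col_ebase_unit.
have uU : U \in unitmx by apply: row_ebase_unit.
have pp : p *m p = p by apply: pid_mx_id; apply: rank_leq_row.
have key : p *m (U *m L) *m p = p.
  have : L *m p *m U *m (L *m p *m U) = L *m p *m U by rewrite Hb.
  rewrite !mulmxA => /(congr1 (mulmx (invmx L))).
  rewrite -!mulmxA !mulKmx // => /(congr1 (mulmx^~ (invmx U))).
  by rewrite !mulmxA !mulmxK // -!mulmxA.
have -> : \tr E = \tr (p *m (U *m L) *m p).
  rewrite -Hb; transitivity (\tr ((L *m p) *m (p *m U))).
    by rewrite mulmxA -(mulmxA L p p) pp.
  by rewrite mxtrace_mulC !mulmxA.
by rewrite key tr_pid // rank_leq_row.
Qed.

Lemma tr_tens m n (A : 'M[C]_m) (B : 'M[C]_n) : \tr (A *t B) = \tr A * \tr B.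
Proof.
rewrite /mxtrace (reindex (@mxtens_index m n)) /=; last first.
  by exists (@mxtens_unindex m n) => x _; [apply: mxtens_indexK | apply: mxtens_unindexK].
rewrite big_distrl /=; under [RHS]eq_bigr do rewrite big_distrr /=.
rewrite pair_big /=; apply: eq_bigr => -[i j] _.
by rewrite tensmxE.
Qed.

End Tr.


Section Gen.
Variable C : numClosedFieldType.
Variable N : nat.
Implicit Types M : 'M[C]_N.

Ltac expand := repeat progress (rewrite ?(mulmxBl, mulmxBr, mulmxDl, mulmxDr, mulNmx, mulmxN,
   mulmx1, mul1mx, scalerBr, scalerDr, scalerN) -?scalemxAr -?scalemxAl ?mulmxA).

Ltac zclose := apply/matrixP => i j; rewrite !mxE; ring.

Lemma idemr M X : X *m X = X -> M *m X *m X = M *m X.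
Proof. by move=> h; rewrite -mulmxA h. Qed.

Lemma DDD (X Y : 'M[C]_N) : X *m X = X -> Y *m Y = Y ->
  (X - Y) *m (X - Y) *m (X - Y) = (X - Y) - (X *m Y *m X - Y *m X *m Y).
Proof.
move=> hX hY; have hXr := fun M => idemr M hX; have hYr := fun M => idemr M hY.
expand; rewrite ?(hX, hY, hXr, hYr).
zclose.
Qed.


Lemma mulmx_pow M m : M ^+ m.+1 = M ^+ m *m M.
Proof. by rewrite exprSr mulmxE. Qed.

Section XY.
Variables X Y : 'M[C]_N.
Hypothesis hX : X *m X = X.
Hypothesis hY : Y *m Y = Y.

Lemma hXr M : M *m X *m X = M *m X. Proof. exact: idemr. Qed.
Lemma hYr M : M *m Y *m Y = M *m Y. Proof. exact: idemr. Qed.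

Ltac idem := rewrite ?(hX, hY, hXr, hYr).

Lemma pow_XY m : (X *m Y) ^+ m.+1 *m X = (X *m Y *m X) ^+ m.+1.
Proof.
elim: m => [|m IH]; first by rewrite !expr1.
rewrite mulmx_pow [in RHS]mulmx_pow -IH.
by expand; idem.
Qed.

Lemma tr_pow_XY m : \tr ((X *m Y) ^+ m.+1) = \tr ((X *m Y *m X) ^+ m.+1).
Proof.
rewrite -pow_XY exprS -!mulmxE -!mulmxA (mulmxA Y).
by rewrite [RHS]mxtrace_mulC hXr [RHS]mxtrace_mulC.
Qed.

Lemma XA : X *m (X *m Y *m X) = X *m Y *m X.
Proof. by expand; idem. Qed.
Lemma AX : (X *m Y *m X) *m X = X *m Y *m X.
Proof. by expand; idem. Qed.


Lemma geom_rec (q : C) m :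
  \sum_(i < m.+2) q ^+ i = 1 + q * \sum_(i < m.+1) q ^+ i.
Proof.
rewrite big_ord_recl expr0; congr (_ + _); rewrite mulr_sumr.
by apply: eq_bigr => i _; rewrite lift0 exprS.
Qed.

Lemma trDD : \tr X = \tr Y ->
  \tr ((X - Y) *m (X - Y)) = 2%:R * \tr (X - X *m Y *m X).
Proof.
move=> eXY.
have -> : (X - Y) *m (X - Y) = X + Y - X *m Y - Y *m X by expand; idem; zclose.
rewrite !raddfB !raddfD /= -eXY (mxtrace_mulC Y X).
have -> : \tr (X *m Y *m X) = \tr (X *m Y).
  by rewrite mxtrace_mulC mulmxA hX.
by rewrite -mulr_natl; ring.
Qed.

Hypothesis aX : adjmx X = X.
Hypothesis aY : adjmx Y = Y.

Lemma herm_sq0 (T : 'M[C]_N) : adjmx T = T -> T *m T = 0 -> T = 0.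
Proof.
by move=> aT TT; apply: tr_adj_mul_eq0; rewrite aT TT linear0.
Qed.

Section PartA.
Variable q : C.
Hypothesis rel : X *m Y *m X - Y *m X *m Y = q *: (X - Y).
Hypothesis eXY : \tr X = \tr Y.

Lemma a_AA : (X *m Y *m X) *m (X *m Y *m X) = X *m Y *m X - q *: (X - X *m Y *m X).
Proof.
have e1 : X *m (X *m Y *m X - Y *m X *m Y) *m X =
     X *m Y *m X - (X *m Y *m X) *m (X *m Y *m X) by expand; idem.
rewrite rel in e1.
have e2 : X *m (q *: (X - Y)) *m X = q *: (X - X *m Y *m X) by expand; idem.
rewrite e2 in e1; rewrite e1; zclose.
Qed.

Lemma a_powA m : (X *m Y *m X) ^+ m.+1 = X - (\sum_(i < m.+1) q ^+ i) *: (X - X *m Y *m X).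
Proof.
have AA := a_AA; have XA' := XA; have AX' := AX.
set A := X *m Y *m X in AA XA' AX' *.
elim: m => [|m IH].
  rewrite expr1 big_ord1 expr0; zclose.
rewrite mulmx_pow IH geom_rec.
set s := \sum_(i < m.+1) q ^+ i.
rewrite mulmxBl -scalemxAl mulmxBl XA' AA; zclose.
Qed.

Lemma a_rank : 2%:R * \tr (X - X *m Y *m X) = (1 - q) * (\rank (X - Y))%:R.
Proof.
have D3 : (X - Y) *m (X - Y) *m (X - Y) = (1 - q) *: (X - Y).
  by rewrite DDD // rel; zclose.
have aD : adjmx (X - Y) = X - Y by rewrite adjmxB aX aY.
rewrite -trDD //.
set D := X - Y in D3 aD *.
case: (eqVneq q 1) => [q1|qn1].
  rewrite q1 subrr scale0r in D3.
  have T0 : D *m D = 0.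
    apply: herm_sq0; first by rewrite adjmxM aD.
    by rewrite mulmxA D3 mul0mx.
  by rewrite T0 linear0 q1 subrr mul0r.
have c0 : 1 - q != 0 by rewrite subr_eq0 eq_sym.
set E := (1 - q)^-1 *: (D *m D).
have EE : E *m E = E.
  rewrite /E -scalemxAl -scalemxAr scalerA mulmxA D3 -scalemxAl scalerA.
  by congr (_ *: _); field.
have rE : \rank E = \rank D.
  apply/eqP; rewrite eqn_leq; apply/andP; split.
    by rewrite /E (eqmx_scale _ (invr_neq0 c0)) mxrankM_maxl.
  have -> : D = D *m E.
    rewrite /E -scalemxAr mulmxA D3 scalerA mulVf // scale1r //.
  exact: mxrankM_maxr.
have := rank_idem EE; rewrite rE /E mxtraceZ => ->.
by field.
Qed.

Lemma part_a_gen m : \tr ((X *m Y) ^+ m.+1) =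
  \tr X + (q ^+ m.+1 - 1) * ((\rank (X - Y))%:R / 2%:R).
Proof.
rewrite tr_pow_XY // a_powA raddfB /= mxtraceZ subrX1.
have H := a_rank.
have two0 : (2%:R : C) != 0 by rewrite pnatr_eq0.
set t := \tr (X - X *m Y *m X) in H *.
have -> : t = (1 - q) * (\rank (X - Y))%:R / 2%:R.
  by rewrite -H; field.
by field.
Qed.

End PartA.

Lemma adjXYX : adjmx (X *m Y *m X) = X *m Y *m X.
Proof. by rewrite !adjmxM aX aY mulmxA. Qed.

Section PartB.
Variables p k : C.
Hypothesis preal : p \is Num.real.
Hypothesis htr : forall m, (1 <= m <= 3)%N ->
  \tr ((X *m Y) ^+ m) = \tr X + ((1 - p) ^+ m - 1) * k.

Lemma b_Nn : (X - X *m Y *m X) *m (X - X *m Y *m X) = p *: (X - X *m Y *m X).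
Proof.
have t1 : \tr (X *m Y *m X) = \tr X + ((1 - p) ^+ 1 - 1) * k.
  by rewrite -htr // -[1%N]/(0.+1) tr_pow_XY expr1.
have t2 : \tr (X *m Y *m X *m Y *m X) = \tr X + ((1 - p) ^+ 2 - 1) * k.
  rewrite -htr // -[2%N]/(1.+1) tr_pow_XY mulmx_pow expr1.
  by congr (\tr _); expand; idem.
have t3 : \tr (X *m Y *m X *m Y *m X *m Y *m X) = \tr X + ((1 - p) ^+ 3 - 1) * k.
  rewrite -htr // -[3%N]/(2.+1) tr_pow_XY mulmx_pow mulmx_pow expr1.
  by congr (\tr _); expand; idem.
set Z := X - X *m Y *m X - p *: X.
have aZ : adjmx Z = Z by rewrite /Z !adjmxB adjmxZ conj_Creal // adjXYX aX.
have key : \tr ((X - X *m Y *m X) *m Z *m Z) = 0.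
  rewrite /Z; expand; idem.
  rewrite !(raddfB, raddfD) /= !mxtraceZ t1 t2 t3.
  ring.
pose B := X *m (1%:M - Y).
have aB : adjmx B = (1%:M - Y) *m X by rewrite /B adjmxM adjmxB adjmx1 aX aY.
have BB : B *m adjmx B = X - X *m Y *m X by rewrite aB /B; expand; idem; zclose.
clearbody B.
have ZB : Z *m B = 0.
  apply: tr_adj_mul_eq0; rewrite adjmxM aZ.
  by rewrite mulmxA mxtrace_mulC !mulmxA BB.
have : Z *m (X - X *m Y *m X) = 0 by rewrite -BB mulmxA ZB mul0mx.
rewrite /Z; expand; idem; move/eqP; rewrite subr_eq0 => /eqP <-.
expand; idem.
by zclose.
Qed.

End PartB.

Lemma SSX : ((X - Y) *m (X - Y)) *m X = X - X *m Y *m X.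
Proof. by expand; idem; zclose. Qed.
Lemma XSS : X *m ((X - Y) *m (X - Y)) = X - X *m Y *m X.
Proof. by expand; idem; zclose. Qed.

Lemma XT (p : C) : (X - X *m Y *m X) *m (X - X *m Y *m X) = p *: (X - X *m Y *m X) ->
  let S := (X - Y) *m (X - Y) in X *m (S *m S - p *: S) = 0.
Proof.
move=> NX S.
have SXc : S *m X = X *m S by rewrite /S SSX XSS.
have e : (X - X *m Y *m X) *m (X - X *m Y *m X) = X *m S *m S.
  by rewrite -XSS -/S mulmxA -(mulmxA X S X) SXc mulmxA hX.
rewrite mulmxBr -scalemxAr mulmxA -e NX XSS; exact: subrr.
Qed.

End XY.

Lemma b_D3 (X Y : 'M[C]_N) (p : C) : X *m X = X -> Y *m Y = Y ->
  adjmx X = X -> adjmx Y = Y -> p \is Num.real ->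
  (X - X *m Y *m X) *m (X - X *m Y *m X) = p *: (X - X *m Y *m X) ->
  (Y - Y *m X *m Y) *m (Y - Y *m X *m Y) = p *: (Y - Y *m X *m Y) ->
  X *m Y *m X - Y *m X *m Y = (1 - p) *: (X - Y).
Proof.
move=> hX hY aX aY pr NX NY.
have TX := XT hX hY NX; have TY := XT hY hX NY.
set D := X - Y in TX TY *.
have eS : (Y - X) *m (Y - X) = D *m D by rewrite -opprB mulNmx mulmxN opprK.
have aD : adjmx D = D by rewrite adjmxB aX aY.
have H := DDD hX hY; rewrite -/D in H.
have eD : D = X - Y by [].
clearbody D.
rewrite /= eS in TY; rewrite /= in TX.
set S := D *m D in TX TY *.
set T := S *m S - p *: S in TX TY *.
have DT : D *m T = 0 by rewrite {1}eD mulmxBl TX TY subrr.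
have ST : S *m T = 0 by rewrite /S -mulmxA DT mulmx0.
have TT : T *m T = 0.
  by rewrite {1}/T mulmxBl -scalemxAl -mulmxA ST mulmx0 scaler0 subrr.
have aS : adjmx S = S by rewrite /S adjmxM aD.
have aT : adjmx T = T by rewrite /T adjmxB adjmxZ conj_Creal // adjmxM aS.
have T0 := herm_sq0 aT TT.
pose M := D *m S - p *: D.
have aM : adjmx M = M.
  rewrite /M adjmxB adjmxZ conj_Creal // adjmxM aS aD /S.
  by rewrite !mulmxA.
have Meq : M = D *m (S - p *: 1%:M) by rewrite /M mulmxBr -scalemxAr mulmx1.
have comm : (S - p *: 1%:M) *m D = D *m (S - p *: 1%:M).
  by rewrite mulmxBl mulmxBr -scalemxAl -scalemxAr mul1mx mulmx1 /S !mulmxA.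
have MM : M *m M = 0.
  rewrite Meq -mulmxA (mulmxA _ D) comm !mulmxA -/S.
  have -> : S *m (S - p *: 1%:M) = T by rewrite /T mulmxBr -scalemxAr mulmx1.
  by rewrite T0 mul0mx.
have M0 := herm_sq0 aM MM.
have D3 : D *m D *m D = p *: D.
  by apply/eqP; rewrite -subr_eq0 -mulmxA -/S; apply/eqP; exact: M0.
have -> : X *m Y *m X - Y *m X *m Y = D - p *: D by rewrite -D3 H; zclose.
by zclose.
Qed.

End Gen.

Section Main.
Variable C : numClosedFieldType.

Lemma castmx_mulsq a b (e : a = b) (A B : 'M[C]_a) :
  castmx (e, e) A *m castmx (e, e) B = castmx (e, e) (A *m B).
Proof. by case: b / e; rewrite !castmx_id. Qed.

Lemma adjmx_cast a b (e : a = b) (A : 'M[C]_a) :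
  adjmx (castmx (e, e) A) = castmx (e, e) (adjmx A).
Proof. by case: b / e; rewrite !castmx_id. Qed.

Lemma tr_cast a b (e : a = b) (A : 'M[C]_a) : \tr (castmx (e, e) A) = \tr A.
Proof. by case: b / e; rewrite !castmx_id. Qed.

Lemma cast1 a b (e : a = b) : castmx (e, e) (1%:M : 'M[C]_a) = 1%:M.
Proof. by case: b / e; rewrite !castmx_id. Qed.

Lemma adj_tens m n (A : 'M[C]_m) (B : 'M[C]_n) : adjmx (A *t B) = adjmx A *t adjmx B.
Proof. by rewrite /adjmx map_mxT trmx_tens. Qed.

Lemma tens11 m n : (1%:M : 'M[C]_m) *t (1%:M : 'M[C]_n) = 1%:M.
Proof.
apply/matrixP => i j.
case: (mxtens_indexP i) => i0 i1; case: (mxtens_indexP j) => j0 j1.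
rewrite tensmxE !mxE (can_eq (@mxtens_indexK m n)) xpair_eqE.
by case: (i0 == j0); case: (i1 == j1); rewrite ?mulr1 ?mulr0.
Qed.

Lemma pow_shift N (A B : 'M[C]_N) m : (A *m B) ^+ m *m A = A *m (B *m A) ^+ m.
Proof.
elim: m => [|m IH]; first by rewrite !expr0 mul1mx mulmx1.
by rewrite !exprS -!mulmxE -!mulmxA IH !mulmxA.
Qed.

Lemma tr_swap N (A B : 'M[C]_N) m : \tr ((B *m A) ^+ m.+1) = \tr ((A *m B) ^+ m.+1).
Proof.
rewrite exprS -mulmxE -mulmxA -pow_shift mxtrace_mulC mulmx_pow.
by rewrite !mulmxA.
Qed.

End Main.

Theorem proposition3 (C : numClosedFieldType) (n r : nat) (P : 'M[C]_(n * n)) :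
  (2 <= n)%N -> \rank P = r ->
  (* (a) *)
  (forall Q : C, Q \is Num.real -> 0 < Q ->
     nontrivial P -> is_solution Q P ->
     forall m : nat, (1 <= m)%N ->
       \tr ((Pone P *m Ptwo P) ^+ m)
         = (r * n)%:R + (Q ^- (2 * m) - 1) * ((\rank (Pone P - Ptwo P))%:R / 2))
  /\
  (* (b) *)
  (orth_proj P ->
   forall (Q : C) (k : nat), Q \is Num.real -> 1 < Q -> (0 < k)%N ->
     (forall m : nat, (1 <= m <= 3)%N ->
        \tr ((Pone P *m Ptwo P) ^+ m) = (r * n)%:R + (Q ^- (2 * m) - 1) * k%:R) ->
     nontrivial P /\ is_solution Q P).
Proof.
move=> n2 rP.
have facts : orth_proj P ->
  [/\ Pone P *m Pone P = Pone P, Ptwo P *m Ptwo P = Ptwo P,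
      adjmx (Pone P) = Pone P, adjmx (Ptwo P) = Ptwo P &
      \tr (Pone P) = (r * n)%:R /\ \tr (Ptwo P) = (r * n)%:R].
  move=> [aP hP]; split.
  - by rewrite /Pone tensmx_mul hP mulmx1.
  - by rewrite /Ptwo castmx_mulsq tensmx_mul hP mulmx1.
  - by rewrite /Pone adj_tens aP adjmx1.
  - by rewrite /Ptwo adjmx_cast adj_tens aP adjmx1.
  split; first by rewrite /Pone tr_tens mxtrace1 -(rank_idem hP) rP natrM.
  by rewrite /Ptwo tr_cast tr_tens mxtrace1 -(rank_idem hP) rP natrM mulrC.
split.
  move=> Q Qr Q0 _ [oP rel] m; case: m => // m _.
  have [hX hY aX aY [tX tY]] := facts oP.
  have Q2 : Q ^+ 2 != 0 by rewrite expf_neq0 // gt_eqF.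
  have rel' : Pone P *m Ptwo P *m Pone P - Ptwo P *m Pone P *m Ptwo P
      = Q ^- 2 *: (Pone P - Ptwo P).
    by rewrite -rel scalerA mulVf // scale1r.
  rewrite (part_a_gen hX hY aX aY rel') ?tX ?tY //.
  by rewrite exprVn -exprM.
move=> oP Q k Qr Q1 k0 htr.
have [hX hY aX aY [tX tY]] := facts oP.
have Q0 : 0 < Q by apply: lt_trans Q1; exact: ltr01.
have Q2 : Q ^+ 2 != 0 by rewrite expf_neq0 // gt_eqF.
have q1 : Q ^- 2 < 1.
  by rewrite invf_lt1 ?exprn_gt0 // exprn_egt1.
have qk : (Q ^- 2 - 1) * k%:R != 0.
  apply: mulf_neq0; first by rewrite subr_eq0 lt_eqF.
  by rewrite pnatr_eq0 -lt0n.
set p := 1 - Q ^- 2.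
have e1p : 1 - p = Q ^- 2 by rewrite /p opprB addrCA subrr addr0.
have pr : p \is Num.real.
  by rewrite /p rpredB ?rpred1 // rpredV rpredX.
have htr' : forall m, (1 <= m <= 3)%N ->
    \tr ((Pone P *m Ptwo P) ^+ m) = \tr (Pone P) + ((1 - p) ^+ m - 1) * k%:R.
  move=> m hm; rewrite htr // tX e1p exprVn -exprM //.
have htr2 : forall m, (1 <= m <= 3)%N ->
    \tr ((Ptwo P *m Pone P) ^+ m) = \tr (Ptwo P) + ((1 - p) ^+ m - 1) * k%:R.
  move=> [|m] // hm; rewrite tr_swap htr' // tX tY //.
have NX := b_Nn hX hY aX aY pr htr'.
have NY := b_Nn hY hX aY aX pr htr2.
have rel := b_D3 hX hY aX aY pr NX NY.
split; last first.
  split => //; rewrite rel scalerA e1p mulfV // scale1r //.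
have h1 := htr 1%N isT.
split; apply/eqP => Pe.
  move: h1; subst r; rewrite Pe mxrank0 mul0n /Pone tens0mx mul0mx expr1 linear0 add0r muln1.
  by move/esym/eqP; rewrite (negbTE qk).
move: h1; subst r; rewrite Pe mxrank1 /Pone /Ptwo !tens11 cast1 mulmx1 expr1 mxtrace1 muln1.
move/eqP; rewrite -subr_eq0 opprD addrA subrr add0r.
by rewrite oppr_eq0 (negbTE qk).
Qed.
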